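(* Among all $4\times4$ unimodular zerofree matrices $M$, the minimum of $\|(M\;M^{-1})\|$ is $2$. It is attained by $$M=\begin{pmatrix}1&1&1&2\\1&1&2&1\\1&2&2&2\\2&1&2&2\end{pmatrix},\ M^{-1}=\begin{pmatrix}-2&-2&1&2\\-2&-2&2&1\\1&2&-1&-1\\2&1&-1&-1\end{pmatrix}$$ and by $$\tilde M=\begin{pmatrix}1&1&1&2\\-1&1&2&-1\\-2&1&2&-2\\1&2&2&2\end{pmatrix},\ \tilde M^{-1}=\begin{pmatrix}-2&2&-2&1\\-2&-2&1&2\\1&2&-1&-1\\2&-1&1&-1\end{pmatrix},$$ and $M$ and $\tilde M$ are not equivalent.
   Context: A square integer matrix is unimodular if its determinant is $\pm1$. An invertible matrix $Z$ is zerofree if none of the entries of $Z$ and none of the entries of $Z^{-1}$ is zero. For a matrix $A$, $\|A\|$ denotes the maximum of the absolute values of its entries. $(M\;M^{-1})$ denotes the $n\times 2n$ matrix obtained by concatenating $M$ and $M^{-1}$ side by side. Two $n\times n$ matrices $Z,Z'$ are equivalent if $Z'=PZQ$ for some $n\times n$ signed permutation matrices $P,Q$ (permutation matrices whose nonzero entries may be $\pm1$). *)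

(* Defs.v *)
From HB Require Import structures.
From mathcomp Require Import all_boot all_order all_algebra all_fingroup.
Set Implicit Arguments. Unset Strict Implicit. Unset Printing Implicit Defensive.
Import Order.TTheory GRing.Theory Num.Theory.
Local Open Scope ring_scope.

(* Integer matrices; over [int], [invmx] is the true inverse for unimodular M. *)

Definition unimodular (n : nat) (M : 'M[int]_n) : Prop :=
  \det M = 1 \/ \det M = -1.

Definition zerofree (n : nat) (Z : 'M[int]_n) : Prop :=
  Z \in unitmx /\ (forall i j, Z i j != 0) /\ (forall i j, invmx Z i j != 0).

Definition mxnorm (m n : nat) (A : 'M[int]_(m, n)) : nat :=
  (\max_(i < m) \max_(j < n) `|A i j|)%N.

Definition signed_perm_mx (n : nat) (P : 'M[int]_n) : Prop :=
  exists (s : 'S_n) (d : 'rV[int]_n),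
    (forall i, d 0 i = 1 \/ d 0 i = -1) /\ P = diag_mx d *m perm_mx s.

Definition mx_equiv (n : nat) (Z Z' : 'M[int]_n) : Prop :=
  exists P Q : 'M[int]_n, signed_perm_mx P /\ signed_perm_mx Q /\ Z' = P *m Z *m Q.

Definition mx4_of_list (l : seq (seq int)) : 'M[int]_4 :=
  \matrix_(i < 4, j < 4) nth 0 (nth [::] l i) j.

Definition Mex : 'M[int]_4 := mx4_of_list
  [:: [:: 1; 1; 1; 2]; [:: 1; 1; 2; 1]; [:: 1; 2; 2; 2]; [:: 2; 1; 2; 2]].
Definition Mex_inv : 'M[int]_4 := mx4_of_list
  [:: [:: -2; -2; 1; 2]; [:: -2; -2; 2; 1]; [:: 1; 2; -1; -1]; [:: 2; 1; -1; -1]].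
Definition Mtil : 'M[int]_4 := mx4_of_list
  [:: [:: 1; 1; 1; 2]; [:: -1; 1; 2; -1]; [:: -2; 1; 2; -2]; [:: 1; 2; 2; 2]].
Definition Mtil_inv : 'M[int]_4 := mx4_of_list
  [:: [:: -2; 2; -2; 1]; [:: -2; -2; 1; 2]; [:: 1; 2; -1; -1]; [:: 2; -1; 1; -1]].

(* Main.v *)
Require Import Defs.
From HB Require Import structures.
From mathcomp Require Import all_boot all_order all_algebra all_fingroup.
From mathcomp Require Import zify.
Import Order.TTheory GRing.Theory Num.Theory.
Local Open Scope ring_scope.

Lemma int_eq1 (a b : int) : a * b = 1 -> a = 1 \/ a = -1.
Proof.
move=> h; have := @intUnitRing.unitzPl a b.
rewrite mulrC => /(_ h); rewrite qualifE /= => /orP[]/eqP; tauto.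
Qed.

Lemma entry_le_norm m n (A : 'M[int]_(m, n)) i j : (`|A i j| <= mxnorm A)%N.
Proof.
rewrite /mxnorm; apply: leq_trans (leq_bigmax i).
exact: (leq_bigmax (F := fun j => `|A i j|%N)).
Qed.

Lemma pm1 (a : int) : (`|a| <= 1)%N -> a != 0 -> a = 1 \/ a = -1.
Proof. move=> h1 /eqP h2; lia. Qed.

Lemma part1 (M : 'M[int]_4) : unimodular M -> zerofree M ->
     (2 <= mxnorm (row_mx M (invmx M)))%N.
Proof.
move=> _ [U [HM HN]]; rewrite leqNgt; apply/negP => /ltnSE hn.
have hM : forall i j, M i j = 1 \/ M i j = -1.
  move=> i j; apply: pm1 (HM i j).
  by apply: leq_trans hn; rewrite -(row_mxEl M (invmx M)) entry_le_norm.
have hN : forall i j, invmx M i j = 1 \/ invmx M i j = -1.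
  move=> i j; apply: pm1 (HN i j).
  by apply: leq_trans hn; rewrite -(row_mxEr M (invmx M)) entry_le_norm.
have := mulmxV U; move/matrixP/(_ 0 0); rewrite !mxE /=.
rewrite !big_ord_recr big_ord0 /= add0r.
set o0 := (ord_max : 'I_4). 
move: (hM 0 (widen_ord (leqnSn _) (widen_ord (leqnSn _) (widen_ord (leqnSn _) ord_max)))).
move: (hM 0 (widen_ord (leqnSn _) (widen_ord (leqnSn _) ord_max))).
move: (hM 0 (widen_ord (leqnSn _) ord_max)).
move: (hM 0 ord_max).
move: (hN (widen_ord (leqnSn _) (widen_ord (leqnSn _) (widen_ord (leqnSn _) ord_max))) 0).
move: (hN (widen_ord (leqnSn _) (widen_ord (leqnSn _) ord_max)) 0).
move: (hN (widen_ord (leqnSn _) ord_max) 0).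
move: (hN ord_max 0).
by do 8 case=> ->.
Qed.

Lemma inv_of (A B : 'M[int]_4) : A *m B = 1%:M ->
  A \in unitmx /\ invmx A = B /\ unimodular A.
Proof.
move=> AB; have [UA UB] := mulmx1_unit AB.
have iA : invmx A = B.
  by rewrite -[invmx A]mulmx1 -AB mulmxA mulVmx // mul1mx.
split=> //; split=> //.
have := congr1 determinant AB; rewrite det_mulmx det1 => /int_eq1; rewrite /unimodular; tauto.
Qed.

Ltac ord4 i := case: i => [[|[|[|[|?]]]] ?] //.

Lemma Mex_mul : Mex *m Mex_inv = 1%:M.
Proof.
apply/matrixP => i j; rewrite !mxE !big_ord_recr big_ord0 /=.
by ord4 i; ord4 j; rewrite /Mex /Mex_inv /mx4_of_list !mxE.
Qed.

Lemma Mtil_mul : Mtil *m Mtil_inv = 1%:M.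
Proof.
apply/matrixP => i j; rewrite !mxE !big_ord_recr big_ord0 /=.
by ord4 i; ord4 j; rewrite /Mtil /Mtil_inv /mx4_of_list !mxE.
Qed.

Lemma norm2 (A B : 'M[int]_4) :
  (forall i j, `|A i j| <= 2)%N -> (forall i j, `|B i j| <= 2)%N ->
  (exists i j, `|A i j| = 2)%N -> mxnorm (row_mx A B) = 2%N.
Proof.
move=> hA hB [i [j hij]]; apply/eqP; rewrite eqn_leq; apply/andP; split.
  apply/bigmax_leqP => k _; apply/bigmax_leqP => l _.
  by rewrite -(splitK l); case: (split l) => l' /=; rewrite ?row_mxEl ?row_mxEr.
by have := @entry_le_norm _ _ (row_mx A B) i (lshift 4 j); rewrite row_mxEl hij.
Qed.

Lemma Mex_zf : zerofree Mex.
Proof.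
have [U [iA _]] := @inv_of _ _ Mex_mul; split=> //; rewrite iA; split=> i j;
by ord4 i; ord4 j; rewrite /Mex /Mex_inv /mx4_of_list !mxE.
Qed.

Lemma Mtil_zf : zerofree Mtil.
Proof.
have [U [iA _]] := @inv_of _ _ Mtil_mul; split=> //; rewrite iA; split=> i j;
by ord4 i; ord4 j; rewrite /Mtil /Mtil_inv /mx4_of_list !mxE.
Qed.

Lemma Mex_norm : mxnorm (row_mx Mex (invmx Mex)) = 2%N.
Proof.
have [U [iA _]] := @inv_of _ _ Mex_mul; rewrite iA; apply: norm2.
- by move=> i j; ord4 i; ord4 j; rewrite /Mex /mx4_of_list !mxE.
- by move=> i j; ord4 i; ord4 j; rewrite /Mex_inv /mx4_of_list !mxE.
- by exists 0, (ord_max : 'I_4); rewrite /Mex /mx4_of_list !mxE.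
Qed.

Lemma Mtil_norm : mxnorm (row_mx Mtil (invmx Mtil)) = 2%N.
Proof.
have [U [iA _]] := @inv_of _ _ Mtil_mul; rewrite iA; apply: norm2.
- by move=> i j; ord4 i; ord4 j; rewrite /Mtil /mx4_of_list !mxE.
- by move=> i j; ord4 i; ord4 j; rewrite /Mtil_inv /mx4_of_list !mxE.
- by exists 0, (ord_max : 'I_4); rewrite /Mtil /mx4_of_list !mxE.
Qed.

Lemma Mex_pos i j : 0 < Mex i j.
Proof. by ord4 i; ord4 j; rewrite /Mex /mx4_of_list !mxE. Qed.

Lemma not_equiv : ~ mx_equiv Mex Mtil.
Proof.
move=> [P [Q [[s1 [d1 [hd1 ->]]] [[s2 [d2 [hd2 ->]]] HZ]]]].
have E : forall i j, Mtil i j = d1 0 i * Mex (s1 i) ((s2^-1)%g j) * d2 0 ((s2^-1)%g j).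
  move=> i j; rewrite HZ mulmxA.
  have -> : perm_mx s2 = perm_mx ((s2^-1)%g)^-1 by rewrite invgK.
  rewrite -col_permE mul_mx_diag -mulmxA -row_permE mul_diag_mx !mxE.
  by [].
have e00 := E 0 0; have e01 := E 0 1; have e10 := E 1 0; have e11 := E 1 1.
have p1 := Mex_pos (s1 0) ((s2^-1)%g 0); have p2 := Mex_pos (s1 0) ((s2^-1)%g 1).
have p3 := Mex_pos (s1 1) ((s2^-1)%g 0); have p4 := Mex_pos (s1 1) ((s2^-1)%g 1).
move: e00 e01 e10 e11 p1 p2 p3 p4.
set x1 := Mex (s1 0) ((s2^-1)%g 0); set x2 := Mex (s1 0) ((s2^-1)%g 1).
set x3 := Mex (s1 1) ((s2^-1)%g 0); set x4 := Mex (s1 1) ((s2^-1)%g 1).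
clearbody x1 x2 x3 x4.
rewrite /Mtil /mx4_of_list !mxE /=.
case: (hd1 0) => ->; case: (hd1 1) => ->; case: (hd2 ((s2^-1)%g 0)) => ->; case: (hd2 ((s2^-1)%g 1)) => ->;
  move=> *; lia.
Qed.

Theorem mainTheorem10 :
  (forall M : 'M[int]_4, unimodular M -> zerofree M ->
     (2 <= mxnorm (row_mx M (invmx M)))%N)
  /\ (unimodular Mex /\ zerofree Mex /\ invmx Mex = Mex_inv
      /\ mxnorm (row_mx Mex (invmx Mex)) = 2%N)
  /\ (unimodular Mtil /\ zerofree Mtil /\ invmx Mtil = Mtil_inv
      /\ mxnorm (row_mx Mtil (invmx Mtil)) = 2%N)
  /\ ~ mx_equiv Mex Mtil.
Proof.
have [_ [i1 u1]] := @inv_of _ _ Mex_mul.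
have [_ [i2 u2]] := @inv_of _ _ Mtil_mul.
split; first exact: part1.
split; first by split; [|split; [exact: Mex_zf|split; [|exact: Mex_norm]]].
split; first by split; [|split; [exact: Mtil_zf|split; [|exact: Mtil_norm]]].
exact: not_equiv.
Qed.
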